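(* Assume $\mathcal E$ is stable under pullback and $\mathcal F\subseteq\mathcal E$. Let $c$ be a closure operator on $\mathcal A$ and let $X\in\mathcal X$. If $R$ preserves products with $X$ (i.e. $\rho_{X\times Y}=\rho_X\times\rho_Y$ for every $Y\in\mathcal X$, via the canonical comparison), $\rho_X\in\mathcal E$, and $RX$ is $c$-compact, then $X$ is $c^\rho$-compact.
   Context: Standing setting. $\mathcal X$ and $\mathcal A$ are finitely complete categories; $\mathcal X$ carries a proper factorization system $(\mathcal E,\mathcal M)$ and $\mathcal A$ a proper factorization system $(\mathcal F,\mathcal N)$ (proper: every member of $\mathcal E$, resp. $\mathcal F$, is an epimorphism and every member of $\mathcal M$, resp. $\mathcal N$, is a monomorphism). $\mathcal A$ is a full reflective subcategory of $\mathcal X$ with reflector $R:\mathcal X\to\mathcal A$ and reflection (unit) $\rho_X:X\to RX$; as in the paper's setting, $\mathcal N\subseteq\mathcal M$ and $R\mathcal E\subseteq\mathcal F$. For $X\in\mathcal X$, $\operatorname{sub}X$ is the class $\mathcal M/X$ of $\mathcal M$-morphisms with codomain $X$, preordered by $m\le n$ iff $m=nj$ for some morphism $j$; for $A\in\mathcal A$, $\operatorname{sub}_{\mathcal A}A=\mathcal N/A$ with the same preorder. For $f:X\to Y$ and $m\in\operatorname{sub}X$, the image $f(m)\in\operatorname{sub}Y$ is the $\mathcal M$-part of the $(\mathcal E,\mathcal M)$-factorization of $fm$, and for $n\in\operatorname{sub}Y$ the preimage $f^{-1}(n)\in\operatorname{sub}X$ is the pullback of $n$ along $f$ (analogously in $\mathcal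 A$ using $(\mathcal F,\mathcal N)$). A closure operator $c$ on $\mathcal A$ (with respect to $\mathcal N$) is a family of maps $c_A:\operatorname{sub}_{\mathcal A}A\to\operatorname{sub}_{\mathcal A}A$ ($A\in\mathcal A$) such that $m\le c_A(m)$, $m\le n\Rightarrow c_A(m)\le c_A(n)$, and $f(c_A(m))\le c_B(f(m))$ for every morphism $f:A\to B$ of $\mathcal A$; closure operators on $\mathcal X$ (with respect to $\mathcal M$) are defined likewise. For an arbitrary morphism $g:M\to A$ of $\mathcal A$, write $g(1_M)$ for the $\mathcal N$-part of its $(\mathcal F,\mathcal N)$-factorization and put $c_A(g):=c_A(g(1_M))$. The $R$-initial lift of $c$ is the closure operator $c^\rho$ on $\mathcal X$ given by $c^\rho_X(m)=\rho_X^{-1}(c_{RX}(Rm))$ for $X\in\mathcal X$, $m\in\operatorname{sub}X$. For a closure operator $d$ on a category, an object $X$ is $d$-compact if for every object $Y$ the projection $\pi_Y:X\times Y\to Y$ is $d$-preserving, i.e. $\pi_Y(d_{X\times Y}(m))=d_Y(\pi_Y(m))$ for every subobject $m$ of $X\times Y$ (for $c$-compactness of an object of $\mathcal A$, $Y$ ranges over $\mathcal A$ and subobjects over $\operatorname{sub}_{\mathcal A}$; for $c^\rho$-compactness, over $\mathcal X$ and $\operatorname{sub}$). *)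

(* Defs.v *)
Set Implicit Arguments.
Unset Strict Implicit.

Record Cat := {
  ob :> Type;
  hom : ob -> ob -> Type;
  idm : forall A, hom A A;
  comp : forall A B C, hom B C -> hom A B -> hom A C;
  comp_idl : forall A B (f : hom A B), comp (idm B) f = f;
  comp_idr : forall A B (f : hom A B), comp f (idm A) = f;
  comp_assoc : forall A B C D (h : hom C D) (g : hom B C) (f : hom A B),
      comp h (comp g f) = comp (comp h g) f }.
Arguments hom {c} _ _.
Arguments idm {c} _.
Arguments comp {c A B C} _ _.
Notation "g ⊙ f" := (comp g f) (at level 40, left associativity).

Definition is_mono {C : Cat} {A B : C} (f : hom A B) :=
  forall Z (u v : hom Z A), f ⊙ u = f ⊙ v -> u = v.
Definition is_epi {C : Cat} {A B : C} (f : hom A B) :=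
  forall Z (u v : hom B Z), u ⊙ f = v ⊙ f -> u = v.
Definition is_iso {C : Cat} {A B : C} (f : hom A B) :=
  exists g : hom B A, g ⊙ f = idm A /\ f ⊙ g = idm B.

Definition morclass (C : Cat) := forall A B : C, hom A B -> Prop.

Record terminal (C : Cat) := {
  term_ob : C;
  to_term : forall A : C, hom A term_ob;
  term_uniq : forall A (u v : hom A term_ob), u = v }.

Record product (C : Cat) (A B : C) := {
  prod_ob : C;
  pr1 : hom prod_ob A;
  pr2 : hom prod_ob B;
  prod_univ : forall Z (f : hom Z A) (g : hom Z B),
      exists! h : hom Z prod_ob, pr1 ⊙ h = f /\ pr2 ⊙ h = g }.

(* pullback of n : N -> Y along f : X -> Y; pb_1 : P -> X is "f^{-1}(n)" *)
Record pullback (C : Cat) (X N Y : C) (f : hom X Y) (n : hom N Y) := {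
  pb_ob : C;
  pb_1 : hom pb_ob X;
  pb_2 : hom pb_ob N;
  pb_comm : f ⊙ pb_1 = n ⊙ pb_2;
  pb_univ : forall Z (u : hom Z X) (v : hom Z N), f ⊙ u = n ⊙ v ->
      exists! h : hom Z pb_ob, pb_1 ⊙ h = u /\ pb_2 ⊙ h = v }.

Record FinComplete (C : Cat) := {
  fc_term : terminal C;
  fc_prod : forall A B : C, product A B;
  fc_pb : forall (X N Y : C) (f : hom X Y) (n : hom N Y), pullback f n }.
Arguments fc_prod {C} _ _ _.
Arguments fc_pb {C} _ {X N Y} _ _.

Record FactSys (C : Cat) := {
  fs_E : morclass C;
  fs_M : morclass C;
  fs_fob : forall (A B : C) (f : hom A B), C;
  fs_fe : forall (A B : C) (f : hom A B), hom A (fs_fob f);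
  fs_fm : forall (A B : C) (f : hom A B), hom (fs_fob f) B;
  fs_fact : forall (A B : C) (f : hom A B), fs_fm f ⊙ fs_fe f = f;
  fs_fE : forall (A B : C) (f : hom A B), fs_E (fs_fe f);
  fs_fM : forall (A B : C) (f : hom A B), fs_M (fs_fm f);
  fs_E_isoL : forall (A B D : C) (e : hom A B) (i : hom B D),
      is_iso i -> fs_E e -> fs_E (i ⊙ e);
  fs_E_isoR : forall (A B D : C) (i : hom A B) (e : hom B D),
      is_iso i -> fs_E e -> fs_E (e ⊙ i);
  fs_M_isoL : forall (A B D : C) (m : hom A B) (i : hom B D),
      is_iso i -> fs_M m -> fs_M (i ⊙ m);
  fs_M_isoR : forall (A B D : C) (i : hom A B) (m : hom B D),
      is_iso i -> fs_M m -> fs_M (m ⊙ i);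
  fs_diag : forall (A B D F : C) (e : hom A B) (m : hom D F)
      (u : hom A D) (v : hom B F),
      fs_E e -> fs_M m -> m ⊙ u = v ⊙ e ->
      exists! d : hom B D, d ⊙ e = u /\ m ⊙ d = v }.
Arguments fs_E {C} _ {A B} _.
Arguments fs_M {C} _ {A B} _.
Arguments fs_fob {C} _ {A B} _.
Arguments fs_fe {C} _ {A B} _.
Arguments fs_fm {C} _ {A B} _.

Definition proper {C : Cat} (fs : FactSys C) :=
  (forall (A B : C) (e : hom A B), fs_E fs e -> is_epi e) /\
  (forall (A B : C) (m : hom A B), fs_M fs m -> is_mono m).

(* a morphism with codomain X; it is a subobject (element of sub X = M/X)
   when its map lies in M *)
Record arr (C : Cat) (X : C) := mkArr { a_dom : C; a_map : hom a_dom X }.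
Arguments mkArr {C X a_dom} a_map.

Definition sub_le {C : Cat} {X : C} (m n : arr X) :=
  exists j : hom (a_dom m) (a_dom n), a_map m = a_map n ⊙ j.
Definition sub_eq {C : Cat} {X : C} (m n : arr X) := sub_le m n /\ sub_le n m.

Definition image {C : Cat} (fs : FactSys C) {X Y : C} (f : hom X Y) (m : arr X)
  : arr Y := mkArr (fs_fm fs (f ⊙ a_map m)).
Definition preimage {C : Cat} (fc : FinComplete C) {X Y : C} (f : hom X Y)
  (n : arr Y) : arr X := mkArr (pb_1 (fc_pb fc f (a_map n))).

Definition clop (C : Cat) := forall X : C, arr X -> arr X.

Definition is_closure {C : Cat} (fs : FactSys C) (c : clop C) :=
  (forall (X : C) (m : arr X), fs_M fs (a_map m) ->
      fs_M fs (a_map (c X m)) /\ sub_le m (c X m)) /\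
  (forall (X : C) (m n : arr X), fs_M fs (a_map m) -> fs_M fs (a_map n) ->
      sub_le m n -> sub_le (c X m) (c X n)) /\
  (forall (X Y : C) (f : hom X Y) (m : arr X), fs_M fs (a_map m) ->
      sub_le (image fs f (c X m)) (c Y (image fs f m))).

Definition preserving {C : Cat} (fs : FactSys C) (d : clop C) {X Y : C}
  (f : hom X Y) :=
  forall m : arr X, fs_M fs (a_map m) ->
    sub_eq (image fs f (d X m)) (d Y (image fs f m)).

Definition compact {C : Cat} (fc : FinComplete C) (fs : FactSys C) (d : clop C)
  (X : C) := forall Y : C, preserving fs d (pr2 (fc_prod fc X Y)).

Section FullSub.
Variables (C : Cat) (P : C -> Prop).
Definition fs_ob := {x : C | P x}.
Definition fs_hom (a b : fs_ob) := hom (proj1_sig a) (proj1_sig b).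
Definition fs_id (a : fs_ob) : fs_hom a a := idm (proj1_sig a).
Definition fs_comp (a b d : fs_ob) (g : fs_hom b d) (f : fs_hom a b) : fs_hom a d :=
  g ⊙ f.
Lemma fs_idl a b (f : fs_hom a b) : fs_comp (fs_id b) f = f.
Proof. apply comp_idl. Qed.
Lemma fs_idr a b (f : fs_hom a b) : fs_comp f (fs_id a) = f.
Proof. apply comp_idr. Qed.
Lemma fs_assoc a b d e (h : fs_hom d e) (g : fs_hom b d) (f : fs_hom a b) :
  fs_comp h (fs_comp g f) = fs_comp (fs_comp h g) f.
Proof. apply comp_assoc. Qed.
Definition FullSub : Cat := Build_Cat fs_idl fs_idr fs_assoc.
End FullSub.

(* A = FullSub C P is reflective, with reflector R and units rho *)
Record Reflection (C : Cat) (P : C -> Prop) := {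
  rR : C -> FullSub P;
  rho : forall X : C, hom X (proj1_sig (rR X));
  rext : forall (X : C) (A : FullSub P),
      hom X (proj1_sig A) -> @hom (FullSub P) (rR X) A;
  rext_comm : forall (X : C) (A : FullSub P) (f : hom X (proj1_sig A)),
      (rext f : hom (proj1_sig (rR X)) (proj1_sig A)) ⊙ rho X = f;
  rext_uniq : forall (X : C) (A : FullSub P) (f : hom X (proj1_sig A))
      (g : @hom (FullSub P) (rR X) A),
      (g : hom (proj1_sig (rR X)) (proj1_sig A)) ⊙ rho X = f -> g = rext f }.
Arguments rR {C P} _ _.
Arguments rho {C P} _ _.
Arguments rext {C P} _ {X A} _.

Definition Rmor {C : Cat} {P : C -> Prop} (rf : Reflection P) {X Y : C}
  (f : hom X Y) : @hom (FullSub P) (rR rf X) (rR rf Y) :=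
  rext rf (rho rf Y ⊙ f).

Definition arr_incl {C : Cat} {P : C -> Prop} {A : FullSub P}
  (m : @arr (FullSub P) A) : arr (proj1_sig A) :=
  @mkArr C (proj1_sig A) (proj1_sig (a_dom m)) (a_map m).

(* the R-initial lift  c^rho_X(m) = rho_X^{-1}( c_{RX}( (Rm)(1) ) ) *)
Definition lift_clop {C : Cat} {P : C -> Prop} (fcX : FinComplete C)
  (fsA : FactSys (FullSub P)) (rf : Reflection P) (c : clop (FullSub P))
  : clop C :=
  fun X m =>
    preimage fcX (rho rf X)
      (arr_incl (c (rR rf X) (mkArr (fs_fm fsA (Rmor rf (a_map m)))))).

Definition R_preserves_products_with {C : Cat} {P : C -> Prop}
  (fcX : FinComplete C) (fcA : FinComplete (FullSub P)) (rf : Reflection P)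
  (X : C) :=
  forall Y : C,
    exists phi : @hom (FullSub P) (rR rf (prod_ob (fc_prod fcX X Y)))
                   (prod_ob (fc_prod fcA (rR rf X) (rR rf Y))),
      is_iso phi /\
      pr1 (fc_prod fcA (rR rf X) (rR rf Y)) ⊙ phi = Rmor rf (pr1 (fc_prod fcX X Y)) /\
      pr2 (fc_prod fcA (rR rf X) (rR rf Y)) ⊙ phi = Rmor rf (pr2 (fc_prod fcX X Y)).

(* Main.v *)
Require Import Defs.
Set Implicit Arguments.
Unset Strict Implicit.

Lemma E_comp (C:Cat) (fs:FactSys C) (Hp: proper fs) (A B D:C) (e1:hom A B) (e2: hom B D):
  fs_E fs e1 -> fs_E fs e2 -> fs_E fs (e2 ⊙ e1).
Proof.
  intros H1 H2. destruct Hp as [Hepi _].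
  pose proof (fs_fact fs (e2 ⊙ e1)) as Hf.
  destruct (@fs_diag C fs _ _ _ _ e1 (fs_fm fs (e2 ⊙ e1)) (fs_fe fs (e2 ⊙ e1)) e2 H1 (fs_fM fs _))
    as [d1 [[Hd1a Hd1b] _]].
  { rewrite Hf. reflexivity. }
  destruct (@fs_diag C fs _ _ _ _ e2 (fs_fm fs (e2 ⊙ e1)) d1 (idm _) H2 (fs_fM fs _))
    as [d2 [[Hd2a Hd2b] _]].
  { rewrite comp_idl; auto. }
  assert (Hiso: is_iso (fs_fm fs (e2 ⊙ e1))).
  { exists d2. split; auto.
    apply (Hepi _ _ _ (fs_fE fs (e2 ⊙ e1))).
    rewrite <- comp_assoc, Hf, comp_assoc, Hd2a, Hd1a, comp_idl. reflexivity. }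
  rewrite <- Hf. apply (@fs_E_isoL C fs); auto. apply fs_fE.
Qed.

Lemma image_le' (C:Cat) (fs:FactSys C) (Hp: proper fs) (X Y:C) (f:hom X Y) (m:arr X) (b:arr Y)
  (Z : C) (e0 : hom Z (a_dom m)) (h: hom Z (a_dom b)):
  fs_M fs (a_map b) -> fs_E fs e0 -> f ⊙ a_map m ⊙ e0 = a_map b ⊙ h -> sub_le (image fs f m) b.
Proof.
  intros Hb He Hh. unfold sub_le, image; simpl.
  destruct (@fs_diag C fs _ _ _ _ (fs_fe fs (f ⊙ a_map m) ⊙ e0) (a_map b) h (fs_fm fs (f ⊙ a_map m))
     (E_comp Hp He (fs_fE fs _)) Hb) as [d [[_ Hd] _]].
  { rewrite comp_assoc, fs_fact. symmetry; auto. }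
  exists d. auto.
Qed.

Lemma image_le (C:Cat) (fs:FactSys C) (X Y:C) (f:hom X Y) (m:arr X) (b:arr Y) (h: hom (a_dom m) (a_dom b)):
  fs_M fs (a_map b) -> f ⊙ a_map m = a_map b ⊙ h -> sub_le (image fs f m) b.
Proof.
  intros Hb Hh. unfold sub_le, image; simpl.
  destruct (@fs_diag C fs _ _ _ _ (fs_fe fs (f ⊙ a_map m)) (a_map b) h (fs_fm fs (f ⊙ a_map m)) (fs_fE fs _) Hb) as [d [[_ Hd] _]].
  { rewrite fs_fact. symmetry; auto. }
  exists d. auto.
Qed.

Lemma image_le_fact (C:Cat) (fs:FactSys C) (X Y:C) (f:hom X Y) (m:arr X) (b:arr Y):
  sub_le (image fs f m) b -> exists h, f ⊙ a_map m = a_map b ⊙ h.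
Proof.
  intros [j Hj]. simpl in *. exists (j ⊙ fs_fe fs (f ⊙ a_map m)).
  rewrite comp_assoc, <- Hj, fs_fact. reflexivity.
Qed.

Lemma sub_le_trans (C:Cat) (X:C) (a b d: arr X): sub_le a b -> sub_le b d -> sub_le a d.
Proof. intros [j1 H1] [j2 H2]. exists (j2 ⊙ j1). rewrite H1, H2, comp_assoc. reflexivity. Qed.

Lemma Rmor_comp (C:Cat) (P:C->Prop) (rf:Reflection P) (X Y Z:C) (f:hom X Y) (g:hom Y Z):
  Rmor rf (g ⊙ f) = @comp (FullSub P) _ _ _ (Rmor rf g) (Rmor rf f).
Proof.
  symmetry. apply rext_uniq.
  change (((Rmor rf g : @hom C _ _) ⊙ (Rmor rf f : @hom C _ _)) ⊙ rho rf X = rho rf Z ⊙ (g ⊙ f)).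
  rewrite <- comp_assoc. unfold Rmor. rewrite rext_comm, comp_assoc, rext_comm, comp_assoc. reflexivity.
Qed.

Lemma Rnat (C:Cat) (P:C->Prop) (rf:Reflection P) (X Y:C) (f:hom X Y):
  (Rmor rf f : @hom C _ _) ⊙ rho rf X = rho rf Y ⊙ f.
Proof. unfold Rmor. apply rext_comm. Qed.

Lemma prodA_uniq (C:Cat) (P:C->Prop) (rf:Reflection P) (A B: FullSub P) (pr: product A B) (W:C)
  (u v : hom W (proj1_sig (prod_ob pr))) :
  (pr1 pr : @hom C _ _) ⊙ u = (pr1 pr : @hom C _ _) ⊙ v -> (pr2 pr : @hom C _ _) ⊙ u = (pr2 pr : @hom C _ _) ⊙ v -> u = v.
Proof.
  intros H1 H2.
  rewrite <- (rext_comm rf u), <- (rext_comm rf v). f_equal.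
  assert (K : forall (D : FullSub P) (q : @hom (FullSub P) (prod_ob pr) D) (w : hom W (proj1_sig (prod_ob pr))),
     @comp (FullSub P) _ _ _ q (rext rf w) = rext rf ((q : @hom C _ _) ⊙ w)).
  { intros D q w. apply rext_uniq.
    change (((q : @hom C _ _) ⊙ (rext rf w : @hom C _ _)) ⊙ rho rf W = (q : @hom C _ _) ⊙ w).
    rewrite <- comp_assoc, rext_comm. reflexivity. }
  destruct (prod_univ pr (pr1 pr ⊙ rext rf u) (pr2 pr ⊙ rext rf u)) as [h [_ Hu]].
  transitivity h; [symmetry|]; apply Hu; split; auto.
  - rewrite !K, H1. reflexivity.
  - rewrite !K, H2. reflexivity.
Qed.

Lemma M_pb (C:Cat) (fs:FactSys C) (Hp: proper fs) (X N Y: C) (f : hom X Y) (n : hom N Y)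
  (p : pullback f n) : fs_M fs n -> fs_M fs (pb_1 p).
Proof.
  intros Hn. destruct Hp as [_ Hmono].
  set (t1 := pb_1 p). set (mu := fs_fm fs t1). set (eps := fs_fe fs t1).
  assert (Hf : mu ⊙ eps = t1) by apply fs_fact.
  destruct (@fs_diag C fs _ _ _ _ eps n (pb_2 p) (f ⊙ mu) (fs_fE fs _) Hn) as [d [[Hd1 Hd2] _]].
  { rewrite <- comp_assoc, Hf. symmetry. apply pb_comm. }
  destruct (pb_univ p (u:=mu) (v:=d)) as [g [[Hg1 Hg2] _]].
  { rewrite Hd2. reflexivity. }
  assert (Hge : g ⊙ eps = idm _).
  { destruct (pb_univ p (u:=t1) (v:=pb_2 p)) as [h [_ Hu]].
    { apply pb_comm. }
    transitivity h; [symmetry|]; apply Hu; split.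
    - rewrite comp_assoc, Hg1. exact Hf.
    - rewrite comp_assoc, Hg2. exact Hd1.
    - apply comp_idr.
    - apply comp_idr. }
  assert (Heg : eps ⊙ g = idm _).
  { apply (Hmono _ _ mu (fs_fM fs _)). rewrite comp_assoc, Hf, comp_idr. exact Hg1. }
  change (fs_M fs t1). rewrite <- Hf. apply (@fs_M_isoR C fs). exists g; split; auto. apply fs_fM.
Qed.
Theorem theorem2p7
  (CX : Cat) (P : CX -> Prop)
  (fcX : FinComplete CX) (fsX : FactSys CX)
  (fcA : FinComplete (FullSub P)) (fsA : FactSys (FullSub P))
  (rf : Reflection P)
  (HpropX : proper fsX) (HpropA : proper fsA)
  (HNM : forall (A B : FullSub P) (n : @hom (FullSub P) A B),
      fs_M fsA n -> @fs_M CX fsX (proj1_sig A) (proj1_sig B) n)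
  (HRE : forall (A B : CX) (e : hom A B), fs_E fsX e -> fs_E fsA (Rmor rf e))
  (HEpb : forall (A B Z : CX) (f : hom A Z) (e : hom B Z),
      fs_E fsX e -> fs_E fsX (pb_1 (fc_pb fcX f e)))
  (HFE : forall (A B : FullSub P) (f : @hom (FullSub P) A B),
      fs_E fsA f -> @fs_E CX fsX (proj1_sig A) (proj1_sig B) f)
  (c : clop (FullSub P)) (Hc : is_closure fsA c)
  (X : CX)
  (Hpres : R_preserves_products_with fcX fcA rf X)
  (HrhoE : fs_E fsX (rho rf X))
  (Hcpt : compact fcA fsA c (rR rf X)) :
  compact fcX fsX (lift_clop fcX fsA rf c) X.
Proof.
  intros Y m Hm.
  destruct Hc as [Hc1 [Hc2 Hc3]].
  unfold lift_clop, preimage, arr_incl. simpl.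
  set (pp := fc_prod fcX X Y) in *.
  set (pi := pr2 pp).
  set (Rm := Rmor rf (a_map m)).
  set (k := fs_fm fsA Rm). set (f := fs_fe fsA Rm).
  assert (Hkf : @comp (FullSub P) _ _ _ k f = Rm) by apply fs_fact.
  set (sA := c (rR rf (prod_ob pp)) (mkArr k)).
  set (n := fs_fm fsX (pi ⊙ a_map m)). set (e := fs_fe fsX (pi ⊙ a_map m)).
  assert (Hne : n ⊙ e = pi ⊙ a_map m) by apply fs_fact.
  set (k' := fs_fm fsA (Rmor rf n)). set (f' := fs_fe fsA (Rmor rf n)).
  assert (Hkf' : @comp (FullSub P) _ _ _ k' f' = Rmor rf n) by apply fs_fact.
  set (s'A := c (rR rf Y) (mkArr k')).
  assert (HRmain : @comp (FullSub P) _ _ _ (Rmor rf pi) (@comp (FullSub P) _ _ _ k f)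
     = @comp (FullSub P) _ _ _ k' (@comp (FullSub P) _ _ _ f' (Rmor rf e))).
  { rewrite Hkf, comp_assoc, Hkf', <- !Rmor_comp, Hne. unfold Rm. symmetry. apply Rmor_comp. }
  destruct (Hc1 _ (mkArr k) (fs_fM fsA _)) as [HsM Hks].
  assert (H1 : sub_le (image fsA (Rmor rf pi) (mkArr k)) (mkArr k')).
  { apply (image_le' HpropA (f := Rmor rf pi) (m := mkArr k) (b := mkArr k') (e0 := f) (h := @comp (FullSub P) _ _ _ f' (Rmor rf e))).
    - apply fs_fM.
    - apply fs_fE.
    - etransitivity; [symmetry; apply comp_assoc|]. exact HRmain. }
  assert (H2 := Hc2 (rR rf Y) (image fsA (Rmor rf pi) (mkArr k)) (mkArr k') (fs_fM fsA _) (fs_fM fsA _) H1).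
  assert (H3 := sub_le_trans (Hc3 _ _ (Rmor rf pi) (mkArr k) (fs_fM fsA _)) H2).
  destruct (image_le_fact H3) as [j Hj].
  set (pbT := fc_pb fcX (rho rf (prod_ob pp)) (a_map sA)).
  set (pbT' := fc_pb fcX (rho rf Y) (a_map s'A)).
  split.
  - assert (Hj' : (Rmor rf pi : @hom CX _ _) ⊙ a_map sA = a_map s'A ⊙ j) by exact Hj.
    destruct (Hc1 _ (mkArr k') (fs_fM fsA _)) as [Hs'M _].
    destruct (pb_univ pbT' (u := pi ⊙ pb_1 pbT) (v := (j : @hom CX _ _) ⊙ pb_2 pbT)) as [h [[Hh1 Hh2] _]].
    { rewrite comp_assoc, <- (Rnat rf pi), <- comp_assoc, (pb_comm pbT), !comp_assoc, Hj'.
      reflexivity. }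
    apply (image_le (m := mkArr (pb_1 pbT)) (b := mkArr (pb_1 pbT')) (h := h)).
    + apply (M_pb HpropX). apply HNM. exact Hs'M.
    + simpl. symmetry. exact Hh1.
  - destruct (Hpres Y) as [phi [[psi [Hpsiphi Hphipsi]] [Hq1 Hq2]]].
    set (qq := fc_prod fcA (rR rf X) (rR rf Y)) in *.
    set (q1 := pr1 qq) in *. set (q2 := pr2 qq) in *.
    change (q1 ⊙ phi = Rmor rf (pr1 pp)) in Hq1.
    change (q2 ⊙ phi = Rmor rf pi) in Hq2.
    set (mQ := image fsA phi (mkArr k)).
    destruct (Hcpt (rR rf Y) mQ (fs_fM fsA _)) as [_ Hcomp].
    fold qq q2 in Hcomp.
    set (muQ := fs_fm fsA (phi ⊙ k)) in *. set (epsQ := fs_fe fsA (phi ⊙ k)) in *.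
    assert (HQf : muQ ⊙ epsQ = phi ⊙ k) by apply fs_fact.
    set (nu := fs_fm fsA (q2 ⊙ muQ)). set (enu := fs_fe fsA (q2 ⊙ muQ)).
    assert (Hnuf : nu ⊙ enu = q2 ⊙ muQ) by apply fs_fact.
    assert (H4 : sub_le (mkArr k') (image fsA q2 mQ)).
    { destruct (@fs_diag _ fsA _ _ _ _ (f' ⊙ Rmor rf e) nu (enu ⊙ (epsQ ⊙ f)) k'
        (E_comp HpropA (HRE _ _ e (fs_fE _ _)) (fs_fE _ _)) (fs_fM _ _)) as [d [[_ Hd] _]].
      { rewrite comp_assoc, Hnuf, <- comp_assoc, (comp_assoc muQ), HQf, <- comp_assoc,
          (comp_assoc q2), Hq2. exact HRmain. }
      exists d. symmetry. exact Hd. }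
    assert (H5 := Hc2 (rR rf Y) (mkArr k') (image fsA q2 mQ) (fs_fM fsA _) (fs_fM fsA _) H4).
    destruct (sub_le_trans H5 Hcomp) as [j1 Hj1].
    set (sQ := a_map (c (prod_ob qq) mQ)) in *.
    set (nu2 := fs_fm fsA (q2 ⊙ sQ)) in *. set (e2 := fs_fe fsA (q2 ⊙ sQ)) in *.
    assert (Hnu2 : nu2 ⊙ e2 = q2 ⊙ sQ) by apply fs_fact.
    assert (H7 : sub_le (image fsA psi mQ) (mkArr k)).
    { apply (image_le' HpropA (f := psi) (m := mQ) (b := mkArr k) (e0 := epsQ) (h := idm _)).
      - apply fs_fM.
      - apply fs_fE.
      - etransitivity; [symmetry; apply comp_assoc|].
        change (psi ⊙ (muQ ⊙ epsQ) = k ⊙ idm _).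
        rewrite HQf, comp_assoc, Hpsiphi, comp_idl, comp_idr. reflexivity. }
    assert (H8 := Hc2 _ (image fsA psi mQ) (mkArr k) (fs_fM fsA _) (fs_fM fsA _) H7).
    destruct (image_le_fact (sub_le_trans (Hc3 _ _ psi mQ (fs_fM fsA _)) H8)) as [j2 Hj2].
    change (psi ⊙ sQ = a_map sA ⊙ j2) in Hj2.
    assert (HsQ : sQ = phi ⊙ (a_map sA ⊙ j2)).
    { rewrite <- Hj2, comp_assoc, Hphipsi, comp_idl. reflexivity. }
    assert (Hj1C : (a_map s'A : @hom CX _ _) = (nu2 : @hom CX _ _) ⊙ (j1 : @hom CX _ _)) by exact Hj1.
    assert (Hnu2C : (nu2 : @hom CX _ _) ⊙ (e2 : @hom CX _ _) = (q2 : @hom CX _ _) ⊙ (sQ : @hom CX _ _)) by exact Hnu2.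
    assert (HsQC : (sQ : @hom CX _ _) = (phi : @hom CX _ _) ⊙ ((a_map sA : @hom CX _ _) ⊙ (j2 : @hom CX _ _))) by exact HsQ.
    assert (Hq1C : (q1 : @hom CX _ _) ⊙ (phi : @hom CX _ _) = (Rmor rf (pr1 pp) : @hom CX _ _)) by exact Hq1.
    assert (Hq2C : (q2 : @hom CX _ _) ⊙ (phi : @hom CX _ _) = (Rmor rf pi : @hom CX _ _)) by exact Hq2.
    assert (HpsiC : (psi : @hom CX _ _) ⊙ (phi : @hom CX _ _) = idm _) by exact Hpsiphi.
    set (pb1 := fc_pb fcX ((j1 : @hom CX _ _) ⊙ pb_2 pbT') (e2 : @hom CX _ _)).
    assert (Hw1 : fs_E fsX (pb_1 pb1)) by (apply HEpb; apply HFE; apply fs_fE).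
    pose proof (pb_comm pb1) as Hpb1.
    set (w1 := pb_1 pb1) in *. set (z := pb_2 pb1) in *.
    set (r := (a_map sA : @hom CX _ _) ⊙ ((j2 : @hom CX _ _) ⊙ z)).
    assert (HA : rho rf Y ⊙ (pb_1 pbT' ⊙ w1) = (Rmor rf pi : @hom CX _ _) ⊙ r).
    { assert (E := f_equal (fun h => h ⊙ pb_2 pbT') Hj1C). cbv beta in E.
      rewrite comp_assoc, (pb_comm pbT'), E, <- !comp_assoc.
      rewrite (comp_assoc (j1 : @hom CX _ _)), Hpb1.
      rewrite (comp_assoc (nu2 : @hom CX _ _)), Hnu2C, HsQC, <- !comp_assoc. unfold r.
      rewrite !comp_assoc, Hq2C, <- !comp_assoc. reflexivity. }
    set (pb2 := fc_pb fcX ((q1 : @hom CX _ _) ⊙ ((phi : @hom CX _ _) ⊙ r)) (rho rf X)).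
    assert (Hw2 : fs_E fsX (pb_1 pb2)) by (apply HEpb; exact HrhoE).
    pose proof (pb_comm pb2) as Hpb2.
    set (w2 := pb_1 pb2) in *. set (x := pb_2 pb2) in *.
    destruct (prod_univ pp x (pb_1 pbT' ⊙ (w1 ⊙ w2))) as [p [[Hp1 Hp2] _]].
    assert (Hphi : (phi : @hom CX _ _) ⊙ (rho rf (prod_ob pp) ⊙ p) = (phi : @hom CX _ _) ⊙ (r ⊙ w2)).
    { apply (prodA_uniq rf (pr:=qq)).
      - change ((q1 : @hom CX _ _) ⊙ ((phi : @hom CX _ _) ⊙ (rho rf (prod_ob pp) ⊙ p))
           = (q1 : @hom CX _ _) ⊙ ((phi : @hom CX _ _) ⊙ (r ⊙ w2))).
        transitivity (rho rf X ⊙ x).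
        + rewrite (@comp_assoc CX _ _ _ _ q1 phi (rho rf (prod_ob pp) ⊙ p)). rewrite Hq1C. etransitivity; [apply comp_assoc|]. rewrite
            (Rnat rf (pr1 pp)), <- comp_assoc, Hp1. reflexivity.
        + rewrite <- Hpb2, <- !comp_assoc. reflexivity.
      - change ((q2 : @hom CX _ _) ⊙ ((phi : @hom CX _ _) ⊙ (rho rf (prod_ob pp) ⊙ p))
           = (q2 : @hom CX _ _) ⊙ ((phi : @hom CX _ _) ⊙ (r ⊙ w2))).
        rewrite (@comp_assoc CX _ _ _ _ q2 phi (rho rf (prod_ob pp) ⊙ p)), Hq2C.
        rewrite (@comp_assoc CX _ _ _ _ q2 phi (r ⊙ w2)), Hq2C.
        etransitivity; [apply comp_assoc|]. rewrite (Rnat rf pi).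
        etransitivity; [symmetry; apply comp_assoc|]. change (pi ⊙ p = pb_1 pbT' ⊙ (w1 ⊙ w2)) in Hp2. rewrite Hp2.
        rewrite (comp_assoc (pb_1 pbT') w1 w2). etransitivity; [apply comp_assoc|]. rewrite HA.
        symmetry; apply comp_assoc. }
    assert (Hp : rho rf (prod_ob pp) ⊙ p = r ⊙ w2).
    { transitivity ((psi : @hom CX _ _) ⊙ ((phi : @hom CX _ _) ⊙ (rho rf (prod_ob pp) ⊙ p))).
      - symmetry. rewrite (@comp_assoc CX _ _ _ _ psi phi (rho rf (prod_ob pp) ⊙ p)), HpsiC.
        apply comp_idl.
      - rewrite Hphi, (@comp_assoc CX _ _ _ _ psi phi (r ⊙ w2)), HpsiC. apply comp_idl. }
    destruct (pb_univ pbT (u := p) (v := (j2 : @hom CX _ _) ⊙ (z ⊙ w2))) as [g [[Hg1 Hg2] _]].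
    { rewrite Hp. unfold r. rewrite <- !comp_assoc. reflexivity. }
    destruct (@fs_diag CX fsX _ _ _ _ (w1 ⊙ w2) (fs_fm fsX (pi ⊙ pb_1 pbT))
       (fs_fe fsX (pi ⊙ pb_1 pbT) ⊙ g) (pb_1 pbT') (E_comp HpropX Hw2 Hw1) (fs_fM fsX _))
      as [d [[_ Hd] _]].
    { etransitivity; [apply comp_assoc|]. rewrite fs_fact, <- comp_assoc, Hg1. exact Hp2. }
    exists d. simpl. symmetry. exact Hd.
Qed.
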